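(* Let $H_<$ be an ordered graph and let $\delta>0$. There exists a constant $c_2=c_2(H_<,\delta)>0$ such that every ordered graph $G_<$ on $n$ vertices that does not contain $H_<$ as an induced ordered subgraph has a subset $U\subset V(G)$ with $|U|\ge c_2 n$ such that either $\Delta(G[U])\le \delta|U|$ or $\Delta(\overline{G}[U])\le \delta |U|$.
   Context: An ordered graph $G_<$ is a graph with a total ordering $<$ of its vertex set. $H_{<'}$ is an induced ordered subgraph of $G_<$ if there is an injection $\phi:V(H)\to V(G)$ with $u<'v\Rightarrow \phi(u)<\phi(v)$ and $uv\in E(H)\iff\phi(u)\phi(v)\in E(G)$. $G[U]$ is the induced subgraph on $U$, $\overline{G}$ the complement of $G$, and $\Delta$ the maximum degree. *)

(* Defs.v *)
From mathcomp Require Import all_boot all_order all_algebra.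
From mathcomp Require Import reals.
Set Implicit Arguments. Unset Strict Implicit. Unset Printing Implicit Defensive.
Import Order.TTheory GRing.Theory Num.Theory.

(* An ordered graph on k vertices: vertex set 'I_k with its natural order,
   edge relation a symmetric irreflexive boolean relation. *)
Definition simple_graph (k : nat) (e : rel 'I_k) : Prop :=
  irreflexive e /\ symmetric e.

Definition induced_ordered_sub (k n : nat) (h : rel 'I_k) (g : rel 'I_n) : Prop :=
  exists phi : 'I_k -> 'I_n,
    (forall u v : 'I_k, (u < v)%N -> (phi u < phi v)%N) /\
    (forall u v : 'I_k, h u v = g (phi u) (phi v)).

Definition deg_in (n : nat) (g : rel 'I_n) (U : {set 'I_n}) (v : 'I_n) : nat :=
  #|[set w in U | g v w]|.

Definition codeg_in (n : nat) (g : rel 'I_n) (U : {set 'I_n}) (v : 'I_n) : nat :=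
  #|[set w in U | (w != v) && ~~ g v w]|.

Definition maxdeg_le (R : realType) (n : nat) (g : rel 'I_n)
    (U : {set 'I_n}) (d : R) : Prop :=
  forall v, v \in U -> ((deg_in g U v)%:R <= d)%R.

Definition comaxdeg_le (R : realType) (n : nat) (g : rel 'I_n)
    (U : {set 'I_n}) (d : R) : Prop :=
  forall v, v \in U -> ((codeg_in g U v)%:R <= d)%R.

(* Main.v *)
Require Import Defs.
From mathcomp Require Import all_boot all_order all_algebra.
From mathcomp Require Import reals.
From mathcomp Require Import zify.
Import Order.TTheory GRing.Theory Num.Theory.
Set Implicit Arguments. Unset Strict Implicit. Unset Printing Implicit Defensive.


Definition trim (T : finType) (m : nat) (A : {set T}) : {set T} :=
  [set x in take m (enum A)].

Lemma trim_sub (T : finType) m (A : {set T}) : trim m A \subset A.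
Proof.
by apply/subsetP => x; rewrite inE => /mem_take; rewrite mem_enum.
Qed.

Lemma card_trim (T : finType) m (A : {set T}) : m <= #|A| -> #|trim m A| = m.
Proof.
move=> le; rewrite /trim cardsE (card_uniqP _) ?take_uniq ?enum_uniq //.
by rewrite size_take -cardE; case: ltnP le => // H1 H2; apply/eqP; rewrite eqn_leq H1 H2.
Qed.

Lemma card_bigcup_le (T : finType) (F : nat -> {set T}) K :
  #|\bigcup_(j < K) F j| <= \sum_(j < K) #|F j|.
Proof.
elim: K => [|K IH]; first by rewrite !big_ord0 cards0.
rewrite !big_ord_recr /=.
apply: leq_trans (leq_card_setU _ _) _.
by rewrite leq_add2r.
Qed.

Lemma card_filter_sum (T : finType) (Q : {set T}) (r : pred T) :
  #|[set w in Q | r w]| = \sum_(w in Q) (r w : nat).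
Proof.
rewrite -sum1_card (eq_bigl (fun w => (w \in Q) && r w)); last by move=> w; rewrite inE.
rewrite big_mkcondr /=; apply: eq_bigr => w _; by case: (r w).
Qed.

Lemma double_count (T : finType) (P Q : {set T}) (r : T -> T -> bool) :
  \sum_(v in P) #|[set w in Q | r v w]| = \sum_(w in Q) #|[set v in P | r v w]|.
Proof.
under eq_bigr => v _ do rewrite card_filter_sum.
rewrite exchange_big /=; apply: eq_bigr => w _; by rewrite card_filter_sum.
Qed.


Section PL.
Variables (n k' : nat) (g : rel 'I_n) (h : rel 'I_k'.+1).
Local Notation k := k'.+1.
Hypotheses (gsym : symmetric g) (girr : irreflexive g) (hsym : symmetric h) (hirr : irreflexive h).
Hypothesis noemb : ~ induced_ordered_sub h g.
Variables (q : nat) (X : {set 'I_n}) (a : nat).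
Hypotheses (q_gt0 : 0 < q) (a_gt0 : 0 < a).

Definition hn (u v : nat) := h (inord u) (inord v).

Definition pairP (A B : {set 'I_n}) (b : bool) := A \subset X /\ B \subset X /\ [disjoint A & B] /\ #|B| <= k * #|A| /\ a <= #|B| /\
   (forall v, v \in A -> q * #|[set w in B | g v w == b]| < #|B|).

Definition Inv t (f : nat -> 'I_n) (W : nat -> {set 'I_n}) :=
 [/\ (forall u v, u < v -> v < t -> f u < f v /\ hn u v = g (f u) (f v)),
     (forall j, t <= j -> j < k -> forall w, w \in W j -> forall u, u < t -> f u < w /\ hn u j = g (f u) w),
     (forall i j, t <= i -> i < j -> j < k -> forall x y, x \in W i -> y \in W j -> x < y) &
     (forall j, t <= j -> j < k -> #|W j| = q^(k-t) * a /\ W j \subset X)].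

Lemma emb_step r : forall t f W, t + r = k -> Inv t f W -> exists A B b, pairP A B b.
Proof.
elim: r => [|r IH] t f W.
- rewrite addn0 => Et [I1 _ _ _]; exfalso; apply: noemb.
  exists (fun u => f u); split.
  + move=> u v uv; by case: (I1 u v uv _) => //; rewrite Et.
  + move=> u v; case: (ltngtP u v) => [uv|vu|uv].
    * case: (I1 u v uv _); first by rewrite Et. by rewrite /hn !inord_val => _ ->.
    * case: (I1 v u vu _); first by rewrite Et. rewrite /hn !inord_val => _ E. by rewrite hsym E gsym.
    * have -> : u = v by apply: val_inj. by rewrite hirr girr.
- move=> Et [I1 I2 I3 I4].
  have tk : t < k by rewrite -Et; lia.
  set s := q^(k-t) * a.
  pose C v j := [set w in W j | g v w == hn t j].
  pose F j := if t < j then [set v in W t | q * #|C v j| < #|W j|] else set0.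
  have Wt : #|W t| = s /\ W t \subset X := I4 t (leqnn t) tk.
  have s_gt0 : 0 < s by rewrite /s muln_gt0 expn_gt0 q_gt0 a_gt0.
  case: (boolP [exists j : 'I_k, (t < j) && (#|W t| <= k * #|F j|)]).
  + case/existsP => j /andP [tj big].
    exists (F j), (W j), (hn t j).
    have [Wj WjX] := I4 j (ltnW tj) (ltn_ord j).
    have FjWt : F j \subset W t by rewrite /F tj; apply/subsetP => v; rewrite inE => /andP[].
    split; [|split; [|split; [|split; [|split]]]].
    * exact: subset_trans FjWt Wt.2.
    * exact: WjX.
    * rewrite -setI_eq0; apply/eqP/setP => x; rewrite !inE.
      apply/negbTE/negP => /andP [xF xW].
      have := I3 t j (leqnn t) tj (ltn_ord j) x x (subsetP FjWt x xF) xW. by rewrite ltnn.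
    * by rewrite Wj -/s -Wt.1.
    * by rewrite Wj leq_pmull // expn_gt0 q_gt0.
    * by move=> v; rewrite /F tj inE => /andP [_ ->].
  + rewrite negb_exists => /forallP Hall.
    have [v vW Hv] : exists2 v, v \in W t & forall j, t < j -> j < k -> #|W j| <= q * #|C v j|.
      case: (boolP [exists v in W t, [forall j : 'I_k, (t < j) ==> (#|W j| <= q * #|C v j|)]]).
      * case/existsP => v /andP [vW /forallP Hv]; exists v => // j tj jk.
        by have := Hv (Ordinal jk); rewrite /= tj.
      * rewrite negb_exists => /forallP Hnot; exfalso.
        have sub : W t \subset \bigcup_(j < k) F j.
          apply/subsetP => v vW. have := Hnot v; rewrite vW /= negb_forall => /existsP [j].
          rewrite negb_imply => /andP [tj lt].
          apply/bigcupP; exists j => //. by rewrite /F tj inE vW /= ltnNge.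
        have H1 := leq_trans (subset_leq_card sub) (card_bigcup_le F k).
        have H2 : \sum_(j < k) k * #|F j| <= \sum_(j < k) (#|W t|).-1.
          apply: leq_sum => j _. have := Hall j. case: (ltnP t j) => tj /=.
          - move=> H; rewrite -ltnS prednK ?Wt.1 // -Wt.1; by rewrite ltnNge.
          - by rewrite /F ltnNge tj /= cards0 muln0.
        move: H2; rewrite -big_distrr /= sum_nat_const card_ord /= leq_pmul2l // => H2.
        have := leq_trans H1 H2. rewrite Wt.1 => H3. have := s_gt0. by rewrite -ltn_predL ltnNge H3.
    pose W' j := trim (q^(k - t.+1) * a) (C v j).
    pose f' u := if u == t then v else f u.
    apply: (IH t.+1 f' W'); first by rewrite addSnnS.
    have kt : k - t = (k - t.+1).+1 by rewrite subnSK.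
    have CW j : C v j \subset W j by apply/subsetP => w; rewrite inE => /andP[].
    have W'C j : W' j \subset C v j := trim_sub _ _.
    split.
    * move=> u w uw wt. rewrite /f'. case: (eqVneq w t) => [E|wnt].
      - subst w. rewrite (ltn_eqF uw) ?eqxx. exact: I2 t (leqnn t) tk v vW u uw.
      - have wt' : w < t by rewrite ltnS in wt; rewrite ltn_neqAle wnt.
        rewrite (ltn_eqF (ltn_trans uw wt')) ?(negbTE wnt). exact: I1 u w uw wt'.
    * move=> j tj jk w wW' u ut.
      have wC : w \in C v j := subsetP (W'C j) w wW'.
      have wW : w \in W j := subsetP (CW j) w wC.
      rewrite /f'. case: (eqVneq u t) => [->|unt].
      - rewrite ?eqxx. split; first exact: I3 t j (leqnn t) tj jk v w vW wW.
        by move: wC; rewrite inE => /andP [_ /eqP ->].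
      - rewrite ?(negbTE unt). have ut' : u < t by rewrite ltn_neqAle unt -ltnS.
        exact: I2 j (ltnW tj) jk w wW u ut'.
    * move=> i j ti ij jk x y xi yj.
      exact: I3 i j (ltnW ti) ij jk x y (subsetP (CW i) x (subsetP (W'C i) x xi))
                                        (subsetP (CW j) y (subsetP (W'C j) y yj)).
    * move=> j tj jk. split.
      - rewrite card_trim //. have := Hv j tj jk. have [-> _] := I4 j (ltnW tj) jk.
        by rewrite kt expnS -mulnA leq_pmul2l.
      - exact: subset_trans (W'C j) (subset_trans (CW j) (I4 j (ltnW tj) jk).2).
Qed.

Variable x0 : 'I_n.
Hypothesis kqa : k * (q^k * a) <= #|X|.

Lemma PL_core : exists A B b, pairP A B b.
Proof.
set s0 := q^k * a.
pose e := [seq x <- ord_enum n | x \in X].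
have e_uniq : uniq e := filter_uniq _ (ord_enum_uniq n).
have e_size : size e = #|X|.
  rewrite -(card_uniqP e_uniq). apply: eq_card => x. by rewrite mem_filter mem_ord_enum andbT.
have e_sorted : sorted (fun x y : 'I_n => x < y) e.
  apply: sorted_filter; first by move=> ? ? ?; exact: ltn_trans.
  have := iota_ltn_sorted 0 n; by rewrite -val_ord_enum sorted_map.
pose W j := [set nth x0 e (j * s0 + i) | i : 'I_s0].
have idx j (i : 'I_s0) : j < k -> j * s0 + i < size e.
  move=> jk; rewrite e_size; apply: leq_trans kqa.
  have := ltn_ord i; rewrite -/s0; nia.
apply: (@emb_step k 0 (fun _ => x0) W) => //.
split.
- by move=> u v _; rewrite ltn0.
- by move=> j _ _ w _ u; rewrite ltn0.
- move=> i j _ ij jk x y /imsetP [i1 _ ->] /imsetP [j1 _ ->].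
  have ltr : transitive (fun x y : 'I_n => x < y) by move=> ? ? ?; exact: ltn_trans.
  have := @sorted_ltn_nth _ _ ltr x0 e e_sorted (i * s0 + i1) (j * s0 + j1).
  apply.
  + rewrite inE; apply: idx; exact: ltn_trans ij jk.
  + rewrite inE; exact: idx.
  + have := ltn_ord i1; have := ltn_ord j1; nia.
- move=> j _ jk. split.
  + rewrite subn0 card_imset ?card_ord // => i1 i2 E; apply/val_inj/eqP.
    move: E => /eqP; rewrite nth_uniq ?idx //; by rewrite eqn_add2l.
  + apply/subsetP => x /imsetP [i _ ->].
    have : nth x0 e (j * s0 + i) \in e by apply: mem_nth; exact: idx.
    by rewrite mem_filter => /andP[].
Qed.

End PL.


Section Chain.
Variables (n k' : nat) (g : rel 'I_n) (h : rel 'I_k'.+1).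
Local Notation k := k'.+1.
Hypotheses (gsym : symmetric g) (girr : irreflexive g) (hsym : symmetric h) (hirr : irreflexive h).
Hypothesis noemb : ~ induced_ordered_sub h g.

Lemma PL q (X : {set 'I_n}) : 0 < q -> k * q ^ k <= #|X| ->
  exists (A B : {set 'I_n}) (b : bool), A \subset X /\ B \subset X /\ [disjoint A & B] /\ #|B| <= k * #|A| /\
    #|X| <= k * q ^ k * 2 * #|B| /\
    (forall v, v \in A -> q * #|[set w in B | g v w == b]| < #|B|).
Proof.
move=> q_gt0 kqX.
set d := k * q ^ k.
have d_gt0 : 0 < d by rewrite /d muln_gt0 expn_gt0 q_gt0.
set a := #|X| %/ d.
have a_gt0 : 0 < a by rewrite divn_gt0.
have kqa : k * (q ^ k * a) <= #|X| by rewrite mulnA -/d mulnC leq_divM.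
have [x0 _] : exists x0 : 'I_n, x0 \in X.
  have : 0 < #|X| by apply: leq_trans kqX.
  by rewrite card_gt0 => /set0Pn.
have [A [B [b [AX [BX [dAB [BA [aB Hv]]]]]]]] := PL_core gsym girr hsym hirr noemb q_gt0 a_gt0 x0 kqa.
exists A, B, b; do 4 (split => //). split => //.
have := divn_eq #|X| d; have := ltn_pmod #|X| d_gt0; rewrite -/a => H1 H2.
rewrite -/d. nia.
Qed.

Fixpoint chain (b : bool) (m : nat) (X : {set 'I_n}) (s : seq {set 'I_n}) : Prop :=
  if s is A :: s' then exists B : {set 'I_n}, A \subset X /\ B \subset X /\ [disjoint A & B] /\ m <= #|A| /\
     (forall v, v \in A -> #|[set w in B | g v w == b]| < m) /\ chain b m B s'
  else True.

Lemma chain_mono b m (X Y : {set 'I_n}) s : X \subset Y -> chain b m X s -> chain b m Y s.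
Proof.
case: s => //= A s XY [B [AX [BX rest]]]; exists B; split; first exact: subset_trans AX XY.
split => //; exact: subset_trans BX XY.
Qed.

Fixpoint Rf d := if d is d'.+1 then k * (Rf d') ^ k * 2 * Rf d' else 2 * k.

Lemma Rf_ge d : 2 * k <= Rf d.
Proof.
elim: d => [|d IH] //=. have R0 : 0 < Rf d by apply: leq_trans IH.
apply: (leq_trans IH). apply: leq_pmull.
by rewrite !muln_gt0 expn_gt0 R0.
Qed.

Lemma claim_base d r1 r0 (X : {set 'I_n}) : (r1 = 0 \/ r0 = 0) -> Rf d <= #|X| ->
  exists b m s, chain b m X s /\ size s = (if b then r1 else r0) /\ #|X| <= Rf d * m /\ k * m <= #|X|.
Proof.
move=> r10 HX.
have H2k := Rf_ge d.
set m := #|X| %/ k.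
have km : k * m <= #|X| by rewrite mulnC leq_divM.
have m_gt0 : 0 < m by rewrite divn_gt0 //; apply: leq_trans HX; apply: leq_trans H2k; rewrite leq_pmull.
have Xm : #|X| <= Rf d * m.
  have := divn_eq #|X| k; have := ltn_pmod #|X| (isT : 0 < k); rewrite -/m => H1 H3.
  apply: leq_trans (leq_mul H2k (leqnn m)). nia.
case: r10 => ->; [exists true | exists false]; exists m, [::]; by [].
Qed.

Lemma claim d : forall r1 r0, r1 + r0 = d -> forall X : {set 'I_n}, Rf d <= #|X| ->
  exists b m s, chain b m X s /\ size s = (if b then r1 else r0) /\ #|X| <= Rf d * m /\ k * m <= #|X|.
Proof.
elim: d => [|d IH] r1 r0 E X HX.
  apply: claim_base HX; left; by case: r1 E.
case: r1 E => [|a1] E; first by apply: claim_base HX; left.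
case: r0 E => [|a0] E; first by apply: claim_base HX; right.
set q := Rf d.
have q_gt0 : 0 < q by apply: leq_trans (Rf_ge d).
have HX' : k * q ^ k * 2 * q <= #|X| by [].
have kqX : k * q ^ k <= #|X|.
  apply: leq_trans HX'. rewrite -mulnA leq_pmulr // muln_gt0 q_gt0. done.
have [A [B [b [AX [BX [dAB [BA [XB Hv]]]]]]]] := PL q_gt0 kqX.
have c_gt0 : 0 < k * q ^ k * 2 by rewrite !muln_gt0 expn_gt0 q_gt0.
have qB : q <= #|B| by rewrite -(leq_pmul2l c_gt0); apply: leq_trans HX' XB.
have E' : (if b then a1 else a1.+1) + (if b then a0.+1 else a0) = d by case: (b); lia.
have [b' [m [s [ch [sz [Bm kmB]]]]]] := IH _ _ E' B qB.
have mA : m <= #|A| by rewrite -(leq_pmul2l (isT : 0 < k)); apply: leq_trans kmB BA.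
have Xm : #|X| <= Rf d.+1 * m.
  apply: leq_trans XB _.
  have -> : Rf d.+1 * m = (k * q ^ k * 2) * (q * m) by rewrite /= -/q !mulnA.
  by rewrite leq_mul2l Bm orbT.
have kmX : k * m <= #|X| by apply: leq_trans kmB (subset_leq_card BX).
have Hv' : forall v, v \in A -> #|[set w in B | g v w == b]| < m.
  move=> v vA. rewrite -(ltn_pmul2l q_gt0). apply: leq_trans (Hv v vA) Bm.
case: (eqVneq b' b) => [Eb|Nb].
- exists b, m, (A :: s). split; first by exists B; do 5 (split => //); rewrite -Eb.
  split => //=. rewrite sz Eb. by case: (b).
- exists b', m, s. split; first exact: chain_mono BX ch.
  split => //. rewrite sz. by case: (b) Nb; case: (b').
Qed.

Definition Db (b : bool) (U : {set 'I_n}) v := #|[set w in U | (w != v) && (g v w == b)]|.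

Lemma Db_U b (P Q : {set 'I_n}) v : Db b (P :|: Q) v <= Db b P v + Db b Q v.
Proof.
rewrite /Db. apply: leq_trans (leq_card_setU [set w in P | (w != v) && (g v w == b)] [set w in Q | (w != v) && (g v w == b)]).1.
apply: subset_leq_card; apply/subsetP => w; rewrite !inE. by case: (w \in P); case: (w \in Q) => /= // ->.
Qed.

Lemma Db_sub b (P Q : {set 'I_n}) v : P \subset Q -> Db b P v <= Db b Q v.
Proof.
move=> PQ; apply: subset_leq_card; apply/subsetP => w; rewrite !inE => /andP [wP ->].
by rewrite (subsetP PQ w wP).
Qed.

Lemma FL b m (X : {set 'I_n}) s : chain b m X s ->
  exists U : {set 'I_n}, U \subset X /\ #|U| = size s * m /\ \sum_(v in U) Db b U v <= 3 * size s * (m * m).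
Proof.
elim: s X => [|A s IH] X /=.
  move=> _; exists set0; by rewrite sub0set cards0 big_set0.
case=> B [AX [BX [dAB [mA [Hv ch]]]]].
have [U' [U'B [cU' TU']]] := IH B ch.
pose A' := trim m A.
have A'A : A' \subset A := trim_sub _ _.
have cA' : #|A'| = m := card_trim mA.
have dA'U' : [disjoint A' & U'] := disjointW A'A U'B dAB.
exists (A' :|: U').
split; first by rewrite subUset (subset_trans A'A AX) (subset_trans U'B BX).
split.
  have /eqP -> : #|A' :|: U'| == #|A'| + #|U'| by rewrite (leq_card_setU A' U').2.
  by rewrite cA' cU' mulSn.
rewrite (eq_bigl [predU A' & U']); last by move=> v; rewrite !inE.
rewrite bigU //=.
have S1 : \sum_(v in A') Db b (A' :|: U') v <= \sum_(v in A') (m + m).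
  apply: leq_sum => v vA'. apply: leq_trans (Db_U _ _ _ _) _. apply: leq_add.
  - by rewrite -cA'; apply: subset_leq_card; apply/subsetP => w; rewrite inE => /andP[].
  - apply: ltnW; apply: leq_trans (Hv v (subsetP A'A v vA')).
    apply: subset_leq_card; apply/subsetP => w; rewrite !inE => /andP [wU /andP [_ ->]].
    by rewrite (subsetP U'B w wU).
have S2 : \sum_(v in U') Db b A' v <= \sum_(w in A') m.
  apply: leq_trans (_ : \sum_(v in U') #|[set w in A' | g v w == b]| <= _).
    apply: leq_sum => v _. apply: subset_leq_card; apply/subsetP => w; rewrite !inE => /andP [-> /andP [_ ->]].
    done.
  rewrite double_count. apply: leq_sum => w wA'. apply: ltnW.
  apply: leq_trans (Hv w (subsetP A'A w wA')).
  apply: subset_leq_card; apply/subsetP => v; rewrite !inE => /andP [vU E].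
  by rewrite (subsetP U'B v vU) gsym.
have S3 : \sum_(v in U') Db b (A' :|: U') v <= \sum_(v in U') Db b A' v + \sum_(v in U') Db b U' v.
  rewrite -big_split /=. apply: leq_sum => v _. exact: Db_U.
move: S1 S2 S3; rewrite !sum_nat_const cA' => S1 S2 S3.
have := leq_add S1 (leq_trans S3 (leq_add S2 TU')). move=> H; apply: leq_trans H _.
nia.
Qed.

End Chain.


Lemma sum_sub_le (T : finType) (Z U : {set T}) (F : T -> nat) : Z \subset U ->
  \sum_(v in Z) F v <= \sum_(v in U) F v.
Proof.
move=> ZU; rewrite [X in X <= _]big_mkcond [X in _ <= X]big_mkcond; apply: leq_sum => v _.
by case: ifP => vZ //; rewrite (subsetP ZU v vZ).
Qed.

Lemma removal n (g : rel 'I_n) b m r (U : {set 'I_n}) : 0 < m -> #|U| = r * m ->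
  \sum_(v in U) Db g b U v <= 3 * r * (m * m) ->
  exists U' : {set 'I_n}, r * m <= 2 * #|U'| /\ forall v, v \in U' -> Db g b U' v <= 6 * m.
Proof.
move=> m_gt0 cU TU.
pose Z := [set v in U | 6 * m < Db g b U v].
have ZU : Z \subset U by apply/subsetP => v; rewrite inE => /andP[].
have HZ : #|Z| * (6 * m) <= 3 * r * (m * m).
  apply: leq_trans TU. rewrite -sum_nat_const. apply: leq_trans (sum_sub_le _ ZU).
  apply: leq_sum => v; rewrite inE => /andP [_ H]; exact: ltnW.
have HZ' : 2 * #|Z| <= r * m.
  have : (2 * #|Z|) * (3 * m) <= (r * m) * (3 * m) by move: HZ; lia.
  by rewrite leq_pmul2r // muln_gt0.
exists (U :\: Z). split.
  rewrite cardsD (setIidPr ZU) cU. lia.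
move=> v; rewrite inE => /andP [vZ vU].
apply: leq_trans (Db_sub g b v (subsetDl U Z)) _.
by move: vZ; rewrite inE vU /= -leqNgt.
Qed.


Unset Implicit Arguments.
Local Open Scope ring_scope.

Theorem corollary12 (R : realType) (k : nat) (h : rel 'I_k)
    (Hh : simple_graph h) (delta : R) (Hdelta : 0 < delta) :
  exists c2 : R, 0 < c2 /\
    forall (n : nat) (g : rel 'I_n), simple_graph g ->
      ~ induced_ordered_sub h g ->
      exists U : {set 'I_n},
        c2 * n%:R <= #|U|%:R /\
        (maxdeg_le g U (delta * #|U|%:R) \/ comaxdeg_le g U (delta * #|U|%:R)).
Proof.
case: k h Hh => [|k'] h [hirr hsym].
  exists 1; split => // n g Hg Hnot; exfalso; apply: Hnot.
  have phi : 'I_0 -> 'I_n by case.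
  by exists phi; split; case.
set D := Num.bound (delta^-1).
have HD : delta^-1 < D%:R by apply: archi_boundP; rewrite ltW // invr_gt0.
have D_gt0 : (0 < D)%N by rewrite -(ltr0n R); apply: lt_trans HD; rewrite invr_gt0.
have dD : 1 <= delta * D%:R.
  have : delta * delta^-1 <= delta * D%:R by rewrite ler_pM2l // ltW.
  by rewrite mulfV ?gt_eqF.
set r := (12 * D)%N.
set N := Rf k' (r + r).
have N_gt0 : (0 < N)%N by apply: leq_trans (Rf_ge k' (r + r)).
exists (N%:R^-1). split; first by rewrite invr_gt0 ltr0n.
move=> n g [girr gsym] Hnot.
case: (ltnP n N) => [nN|Nn].
  case: n g girr gsym Hnot nN => [|n'] g girr gsym Hnot nN.
    exists set0; split; first by rewrite cards0 mulr0.
    by left => v; rewrite inE.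
  exists [set ord0]. rewrite cards1. split.
    by rewrite mulrC ler_pdivrMr ?ltr0n // mul1r ler_nat ltnW.
  left => v; rewrite inE => /eqP ->. rewrite /deg_in.
  have -> : [set w in [set ord0] | g ord0 w] = set0.
    apply/setP => w; rewrite !inE; case: eqP => // ->; by rewrite girr.
  by rewrite cards0 mulr1 ltW.
have HX : (Rf k' (r + r) <= #|[set: 'I_n]|)%N by rewrite cardsT card_ord.
have [b [m [s [ch [sz [nm km]]]]]] := claim gsym girr hsym hirr Hnot (erefl (r + r)%N) HX.
have sz' : size s = r by rewrite sz; case: (b).
rewrite cardsT card_ord in nm.
have m_gt0 : (0 < m)%N by case: m nm {ch km} => //; rewrite muln0 leqn0 => /eqP n0; move: Nn; rewrite n0 leqn0 => /eqP N0; rewrite N0 in N_gt0.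
have [U [_ [cU TU]]] := FL gsym ch. rewrite sz' in cU TU.
have [U' [HU' degU']] := removal m_gt0 cU TU.
have H2 : (6 * m * D <= #|U'|)%N by move: HU'; rewrite /r; lia.
exists U'. split.
  rewrite mulrC ler_pdivrMr ?ltr0n // -natrM ler_nat.
  apply: leq_trans nm _. rewrite mulnC leq_pmul2r //.
  apply: leq_trans H2 => {HU' degU'}; nia.
have key : forall v, v \in U' -> (Db g b U' v)%:R <= delta * #|U'|%:R.
  move=> v vU. have H1 := degU' v vU.
  apply: (@le_trans _ _ ((6 * m)%:R)); first by rewrite ler_nat.
  apply: (@le_trans _ _ ((6 * m)%:R * (delta * D%:R))); first by rewrite ler_peMr ?ler0n.
  by rewrite mulrCA -natrM ler_pM2l // ler_nat.
case: (b) key => key; [left|right] => v vU; apply: le_trans (key v vU); rewrite ler_nat;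
  apply/eq_leq/eq_card => w; rewrite !inE; case: (eqVneq w v) => [->|_] /=;
  by rewrite ?girr ?andbF ?eqb_id ?eqbF_neg.
Qed.
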